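(* Let $m,n$ be nonzero integers with $|m|<|n|$, and let $u$ be a vertex of $\Lambda_{m,n}$. Then $u$ is of type $a$ if and only if there exists a finite set $V_u$ of vertices of $\Lambda_{m,n}$, each at distance $2$ from $u$, such that $\mathrm{lk}_\Lambda(u)\subseteq \bigcup_{v\in V_u} \mathrm{lk}_\Lambda(v)$.
   Context: $\mathrm{BS}(m,n)=\langle a,t\mid ta^mt^{-1}=a^n\rangle$; its Cayley graph $\Upsilon_{m,n}$ for $\{a,t\}$ has $a$-lines (subgraphs spanned by left cosets $g\langle a\rangle$) and $t$-lines (spanned by left cosets $g\langle t\rangle$), called standard lines. $\Lambda_{m,n}$ is the graph with one vertex per standard line, two vertices being adjacent if the corresponding lines intersect; the type of a vertex is $a$ or $t$ according to the label of its line. $\Lambda_{m,n}$ has the path metric with edges of length $1$, and $\mathrm{lk}_\Lambda(u)$ denotes the set of vertices at distance $1$ from $u$. *)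

(* Defs.v *)
(* Baumslag–Solitar group BS(m,n) = <a,t | t a^m t^-1 = a^n>
   realised concretely as words in a, a^-1, t, t^-1 modulo the congruence
   generated by free cancellation and the defining relator. *)
From Stdlib Require Import ZArith List.
Import ListNotations.
Open Scope Z_scope.

Inductive letter := LA | LAi | LT | LTi.

Definition linv (x : letter) : letter :=
  match x with LA => LAi | LAi => LA | LT => LTi | LTi => LT end.

Definition word := list letter.

Definition lpow (x : letter) (k : Z) : word :=
  if (0 <=? k) then repeat x (Z.to_nat k) else repeat (linv x) (Z.to_nat (- k)).

Definition relator (m n : Z) : word := [LT] ++ lpow LA m ++ [LTi] ++ lpow LA (- n).

Inductive bs_eq (m n : Z) : word -> word -> Prop :=
| bs_refl w : bs_eq m n w w
| bs_sym u v : bs_eq m n u v -> bs_eq m n v u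
| bs_trans u v w : bs_eq m n u v -> bs_eq m n v w -> bs_eq m n u w
| bs_free u v x : bs_eq m n (u ++ x :: linv x :: v) (u ++ v)
| bs_rel u v : bs_eq m n (u ++ relator m n ++ v) (u ++ v).

Inductive ltype := TyA | TyT.

Definition gen (ty : ltype) : letter := match ty with TyA => LA | TyT => LT end.

(* A vertex of Lambda_{m,n}: a standard line g<a> or g<t>, represented by
   its type and a representative g of the left coset. *)
Definition vertex := (ltype * word)%type.

Definition same_vertex (m n : Z) (u v : vertex) : Prop :=
  fst u = fst v /\ exists k : Z, bs_eq m n (snd u ++ lpow (gen (fst u)) k) (snd v).

(* Adjacency in Lambda: the two (distinct) standard lines intersect.
   Lines of the same type either coincide or are disjoint (cosets of the
   same subgroup), so adjacency only occurs between lines of different type;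
   an a-line g<a> and a t-line h<t> intersect iff g a^k = h t^l for some k,l. *)
Definition adj (m n : Z) (u v : vertex) : Prop :=
  fst u <> fst v /\
  exists k l : Z, bs_eq m n (snd u ++ lpow (gen (fst u)) k) (snd v ++ lpow (gen (fst v)) l).

Definition dist2 (m n : Z) (u v : vertex) : Prop :=
  ~ same_vertex m n u v /\ ~ adj m n u v /\
  exists w : vertex, adj m n u w /\ adj m n w v.

(* Main.v *)
Require Import Defs.
From Stdlib Require Import ZArith List.
From Stdlib Require Import Lia Setoid Morphisms Reals Lra.
Import ListNotations.
Open Scope Z_scope.

Section G.
Variables m n : Z.

Global Instance bs_equiv : Equivalence (bs_eq m n).
Proof. split; [intro; apply bs_refl | intros ? ?; apply bs_sym | intros ? ? ?; apply bs_trans]. Qed.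

Lemma bs_app_l w u v : bs_eq m n u v -> bs_eq m n (w ++ u) (w ++ v).
Proof.
  induction 1.
  - reflexivity.
  - symmetry; auto.
  - etransitivity; eauto.
  - rewrite !app_assoc. apply bs_free.
  - rewrite (app_assoc w u (relator m n ++ v)), (app_assoc w u v). apply bs_rel.
Qed.

Lemma bs_app_r w u v : bs_eq m n u v -> bs_eq m n (u ++ w) (v ++ w).
Proof.
  induction 1.
  - reflexivity.
  - symmetry; auto.
  - etransitivity; eauto.
  - rewrite <- !app_assoc. simpl. apply bs_free.
  - rewrite <- (app_assoc u (relator m n ++ v) w), <- (app_assoc (relator m n) v w), <- (app_assoc u v w). apply bs_rel.
Qed.

Global Instance app_proper : Proper (bs_eq m n ==> bs_eq m n ==> bs_eq m n) (@app letter).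
Proof.
  intros u u' Hu v v' Hv. transitivity (u ++ v'). apply bs_app_l; auto. apply bs_app_r; auto.
Qed.

Global Instance cons_proper x : Proper (bs_eq m n ==> bs_eq m n) (cons x).
Proof. intros u v H. exact (bs_app_l [x] u v H). Qed.

Lemma linv_invol x : linv (linv x) = x.
Proof. destruct x; reflexivity. Qed.

Lemma Z_nat_cases z : exists p, z = Z.of_nat p \/ z = - Z.of_nat p.
Proof.
  destruct (Z.le_gt_cases 0 z).
  - exists (Z.to_nat z); left; rewrite Z2Nat.id; lia.
  - exists (Z.to_nat (-z)); right; rewrite Z2Nat.id; lia.
Qed.

Lemma lpow_nat x p : lpow x (Z.of_nat p) = repeat x p.
Proof. unfold lpow. rewrite (proj2 (Z.leb_le _ _)) by lia. rewrite Nat2Z.id. reflexivity. Qed.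

Lemma lpow_negnat x p : lpow x (- Z.of_nat p) = repeat (linv x) p.
Proof.
  destruct p. reflexivity.
  unfold lpow. rewrite (proj2 (Z.leb_gt _ _)) by lia. rewrite Z.opp_involutive, Nat2Z.id. reflexivity.
Qed.

Lemma lpow_linv x z : lpow (linv x) z = lpow x (- z).
Proof.
  destruct (Z_nat_cases z) as [p [-> | ->]].
  - rewrite lpow_nat, lpow_negnat. reflexivity.
  - rewrite lpow_negnat, Z.opp_involutive, lpow_nat, linv_invol. reflexivity.
Qed.

Lemma repeat_S_r (y : letter) k : repeat y (S k) = repeat y k ++ [y].
Proof. change (S k) with (1 + k)%nat. rewrite Nat.add_comm, repeat_app. reflexivity. Qed.

Lemma cancel1 y p q : bs_eq m n (repeat y (p + q) ++ repeat (linv y) q) (repeat y p).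
Proof.
  induction q.
  - rewrite Nat.add_0_r, app_nil_r. reflexivity.
  - rewrite Nat.add_succ_r, repeat_S_r. simpl. rewrite <- app_assoc. simpl.
    rewrite bs_free. exact IHq.
Qed.

Lemma cancel2 y p q : bs_eq m n (repeat y p ++ repeat (linv y) (p + q)) (repeat (linv y) q).
Proof.
  induction p.
  - reflexivity.
  - rewrite repeat_S_r. simpl. rewrite <- app_assoc. simpl.
    rewrite bs_free. exact IHp.
Qed.

Lemma mix y P Q : bs_eq m n (repeat y P ++ repeat (linv y) Q) (lpow y (Z.of_nat P - Z.of_nat Q)).
Proof.
  destruct (Nat.le_gt_cases Q P).
  - destruct (Nat.le_exists_sub Q P H) as [R [-> _]].
    rewrite cancel1. rewrite Nat2Z.inj_add, Z.add_simpl_r, lpow_nat. reflexivity.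
  - assert (Hle : (P <= Q)%nat) by lia.
    destruct (Nat.le_exists_sub P Q Hle) as [R [-> _]].
    rewrite Nat.add_comm, cancel2. replace (Z.of_nat P - Z.of_nat (P + R)) with (- Z.of_nat R) by lia.
    rewrite lpow_negnat. reflexivity.
Qed.

Lemma lpow_add x a b : bs_eq m n (lpow x a ++ lpow x b) (lpow x (a + b)).
Proof.
  destruct (Z_nat_cases a) as [P [-> | ->]]; destruct (Z_nat_cases b) as [Q [-> | ->]].
  - rewrite !lpow_nat, <- repeat_app, <- Nat2Z.inj_add, lpow_nat. reflexivity.
  - rewrite lpow_nat, lpow_negnat, mix. reflexivity.
  - rewrite lpow_negnat, lpow_nat.
    rewrite <- (linv_invol x) at 2. rewrite mix, lpow_linv.
    replace (- Z.of_nat P + Z.of_nat Q) with (- (Z.of_nat P - Z.of_nat Q)) by lia. reflexivity.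
  - rewrite !lpow_negnat, <- repeat_app.
    replace (- Z.of_nat P + - Z.of_nat Q) with (- Z.of_nat (P + Q)) by lia.
    rewrite lpow_negnat. reflexivity.
Qed.

Lemma lpow0 x : lpow x 0 = [].
Proof. reflexivity. Qed.

Lemma lpow_inv x a : bs_eq m n (lpow x a ++ lpow x (- a)) [].
Proof. rewrite lpow_add, Z.add_opp_diag_r. reflexivity. Qed.

Lemma lpow_inv' x a : bs_eq m n (lpow x (- a) ++ lpow x a) [].
Proof. rewrite lpow_add, Z.add_opp_diag_l. reflexivity. Qed.

End G.

Section P.
Variables m n : Z.
Hypothesis hm : m <> 0.
Hypothesis hn : n <> 0.

Definition comp (f g : R * R) : R * R := (fst f * fst g, fst f * snd g + snd f)%R.
Definition rr : R := (IZR n / IZR m)%R.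
Definition img (x : letter) : R * R :=
  match x with LA => (1, 1)%R | LAi => (1, -1)%R | LT => (rr, 0)%R | LTi => (/ rr, 0)%R end.
Fixpoint phi (w : word) : R * R :=
  match w with [] => (1, 0)%R | x :: w' => comp (img x) (phi w') end.

Lemma IZRm : IZR m <> 0%R. Proof. apply not_0_IZR; auto. Qed.
Lemma IZRn : IZR n <> 0%R. Proof. apply not_0_IZR; auto. Qed.
Lemma rr_nz : rr <> 0%R.
Proof. unfold rr. pose proof IZRm; pose proof IZRn. intro H1. apply IZRn. apply (f_equal (fun x => x * IZR m)%R) in H1. field_simplify in H1; auto. Qed.

Lemma comp_assoc f g h : comp f (comp g h) = comp (comp f g) h.
Proof. destruct f, g, h; unfold comp; simpl; f_equal; ring. Qed.
Lemma comp_id_l f : comp (1, 0)%R f = f.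
Proof. destruct f; unfold comp; simpl; f_equal; ring. Qed.

Lemma phi_app u v : phi (u ++ v) = comp (phi u) (phi v).
Proof.
  induction u; simpl. now rewrite comp_id_l. rewrite IHu, comp_assoc. reflexivity.
Qed.

Lemma phi_repeat_LA p : phi (repeat LA p) = (1, INR p)%R.
Proof.
  induction p. reflexivity. simpl repeat. simpl phi. rewrite IHp. unfold comp; simpl.
  f_equal; try rewrite S_INR; try ring; destruct p; simpl; ring.
Qed.
Lemma phi_repeat_LAi p : phi (repeat LAi p) = (1, - INR p)%R.
Proof.
  induction p. simpl. f_equal; ring. simpl repeat. simpl phi. rewrite IHp. unfold comp; simpl.
  f_equal; try rewrite S_INR; try ring; destruct p; simpl; ring.
Qed.

Lemma phi_lpowA k : phi (lpow LA k) = (1, IZR k)%R.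
Proof.
  destruct (Z_nat_cases k) as [p [-> | ->]].
  - rewrite lpow_nat, phi_repeat_LA, INR_IZR_INZ. reflexivity.
  - rewrite lpow_negnat. simpl linv. rewrite phi_repeat_LAi, opp_IZR, INR_IZR_INZ. reflexivity.
Qed.

Lemma phi_repeat_LT p : phi (repeat LT p) = (rr ^ p, 0)%R.
Proof.
  induction p. reflexivity. simpl repeat. simpl phi. rewrite IHp. unfold comp; simpl.
  f_equal; ring.
Qed.

Lemma snd_phi_lpowT k : snd (phi (lpow LT k)) = 0%R.
Proof.
  destruct (Z_nat_cases k) as [p [-> | ->]].
  - rewrite lpow_nat, phi_repeat_LT. reflexivity.
  - rewrite lpow_negnat. simpl linv. induction p. reflexivity.
    simpl repeat. simpl phi. unfold comp; simpl. rewrite IHp. ring.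
Qed.

Lemma fst_phi_nz w : fst (phi w) <> 0%R.
Proof.
  pose proof rr_nz.
  induction w; simpl. lra. unfold comp; simpl. apply Rmult_integral_contrapositive_currified; auto.
  destruct a; simpl; try lra; auto. apply Rinv_neq_0_compat; auto.
Qed.

Lemma phi_relator : phi (relator m n) = (1, 0)%R.
Proof.
  unfold relator. rewrite !phi_app, !phi_lpowA. simpl. unfold comp; simpl.
  pose proof IZRm. pose proof rr_nz. rewrite opp_IZR. unfold rr in *.
  pose proof (IZRn). f_equal; field; auto.
Qed.

Lemma phi_inv u v : bs_eq m n u v -> phi u = phi v.
Proof.
  induction 1; auto.
  - congruence.
  - rewrite !phi_app. f_equal. simpl. rewrite !comp_assoc.
    pose proof rr_nz.
    replace (comp (img x) (img (linv x))) with (1, 0)%R. apply comp_id_l.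
    destruct x; unfold comp; simpl; f_equal; field; auto.
  - rewrite !phi_app, phi_relator, comp_id_l. reflexivity.
Qed.

End P.

Section K.
Variables m n : Z.

Lemma free0 x v : bs_eq m n (x :: linv x :: v) v.
Proof. exact (bs_free m n [] v x). Qed.

Lemma base_rel : bs_eq m n (lpow LA n ++ [LT]) ([LT] ++ lpow LA m).
Proof.
  transitivity (relator m n ++ lpow LA n ++ [LT]).
  { symmetry. exact (bs_rel m n [] _). }
  unfold relator. rewrite <- !app_assoc.
  rewrite (app_assoc (lpow LA (-n)) (lpow LA n) [LT]), lpow_inv'. simpl app.
  rewrite (free0 LTi []), app_nil_r. reflexivity.
Qed.

Lemma rel_nat q : bs_eq m n (lpow LA (Z.of_nat q * n) ++ [LT]) ([LT] ++ lpow LA (Z.of_nat q * m)).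
Proof.
  induction q.
  - reflexivity.
  - replace (Z.of_nat (S q) * n) with (n + Z.of_nat q * n) by lia.
    replace (Z.of_nat (S q) * m) with (m + Z.of_nat q * m) by lia.
    rewrite <- (lpow_add m n LA n), <- (lpow_add m n LA m).
    rewrite <- app_assoc, IHq, app_assoc, base_rel, <- app_assoc. reflexivity.
Qed.

Lemma rel_neg a b : bs_eq m n (lpow LA a ++ [LT]) ([LT] ++ lpow LA b) ->
  bs_eq m n (lpow LA (-a) ++ [LT]) ([LT] ++ lpow LA (-b)).
Proof.
  intro H.
  transitivity (lpow LA (-a) ++ [LT] ++ (lpow LA b ++ lpow LA (-b))).
  { rewrite lpow_inv, app_nil_r. reflexivity. }
  rewrite (app_assoc [LT]), <- H.
  rewrite !app_assoc, lpow_inv'. reflexivity.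
Qed.

Lemma rel_Z q : bs_eq m n (lpow LA (q * n) ++ [LT]) ([LT] ++ lpow LA (q * m)).
Proof.
  destruct (Z_nat_cases q) as [p [-> | ->]].
  - apply rel_nat.
  - rewrite !Z.mul_opp_l. apply rel_neg, rel_nat.
Qed.
End K.

Section M.
Variables m n : Z.
Hypothesis hm : m <> 0.
Hypothesis hn : n <> 0.
Hypothesis hmn : Z.abs m < Z.abs n.

Lemma s_gt1 : (1 < Rabs (rr m n))%R.
Proof.
  unfold rr, Rdiv. rewrite Rabs_mult, Rabs_inv, <- !abs_IZR.
  assert (H1 : (0 < IZR (Z.abs m))%R) by (apply IZR_lt; lia).
  assert (H2 : (IZR (Z.abs m) < IZR (Z.abs n))%R) by (apply IZR_lt; lia).
  assert (E : (IZR (Z.abs n) * / IZR (Z.abs m) - 1 = (IZR (Z.abs n) - IZR (Z.abs m)) / IZR (Z.abs m))%R)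
    by (field; lra).
  assert (0 < (IZR (Z.abs n) - IZR (Z.abs m)) / IZR (Z.abs m))%R by (apply Rdiv_lt_0_compat; lra).
  lra.
Qed.

Lemma rr_ne1 : rr m n <> 1%R.
Proof.
  pose proof s_gt1. intro E. rewrite E, Rabs_R1 in H. lra.
Qed.

Lemma bern (s : R) N : (1 <= s)%R -> (1 + INR N * (s - 1) <= s ^ N)%R.
Proof.
  intro Hs. induction N.
  - simpl. lra.
  - rewrite S_INR. simpl.
    assert (0 <= INR N)%R by apply pos_INR.
    assert (0 <= INR N * (s-1) * (s-1))%R by (apply Rmult_le_pos; [apply Rmult_le_pos|]; lra).
    nra.
Qed.

Section Back.
Variable g : word.
Definition wN (N : nat) : vertex := (TyA, g ++ lpow LT (Z.of_nat N)).

Lemma adj_u_wN N : adj m n (TyT, g) (wN N).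
Proof.
  split; [discriminate|]. exists (Z.of_nat N), 0. simpl.
  change (lpow LA 0) with (@nil letter). rewrite app_nil_r. reflexivity.
Qed.

Lemma claim h N : ~ same_vertex m n (TyT, g) (TyT, h) -> adj m n (TyT, h) (wN N) ->
  exists l, l <> 0 /\ (snd (phi m n h) - snd (phi m n g) = fst (phi m n g) * (rr m n) ^ N * IZR l)%R.
Proof.
  intros Hns [_ [k [l H]]]. simpl in H.
  destruct (Z.eq_dec l 0) as [->|Hl].
  - exfalso. apply Hns. split; [reflexivity|]. exists (Z.of_nat N - k). simpl.
    replace (Z.of_nat N - k) with (Z.of_nat N + -k) by lia.
    rewrite <- (lpow_add m n LT), app_assoc.
    change (lpow LA 0) with (@nil letter) in H; rewrite app_nil_r in H. rewrite <- H.
    rewrite <- app_assoc, lpow_inv, app_nil_r. reflexivity.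
  - exists l; split; auto.
    apply (phi_inv m n hm hn) in H. rewrite !phi_app, phi_lpowA, lpow_nat, phi_repeat_LT in H.
    apply (f_equal snd) in H. unfold comp in H; simpl in H. rewrite snd_phi_lpowT in H.
    nra.
Qed.

Lemma bound v : dist2 m n (TyT, g) v -> exists B, forall N, (B <= N)%nat -> ~ adj m n v (wN N).
Proof.
  destruct v as [ty h]. intros [Hns _]. destruct ty.
  - exists 0%nat. intros N _ [H _]. simpl in H. congruence.
  - set (a := fst (phi m n g)). set (D := (snd (phi m n h) - snd (phi m n g))%R).
    set (s := Rabs (rr m n)).
    pose proof s_gt1 as Hs. fold s in Hs.
    assert (Ha : (0 < Rabs a)%R) by (apply Rabs_pos_lt, fst_phi_nz; auto).
    assert (HX : (0 < Rabs a * (s - 1))%R) by (apply Rmult_lt_0_compat; lra).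
    destruct (INR_unbounded (Rabs D / (Rabs a * (s - 1)))) as [B HB].
    exists B. intros N HBN Hadj.
    destruct (claim h N Hns Hadj) as [l [Hl E]]. fold a D in E.
    assert (HB2 : (INR B * (Rabs a * (s - 1)) > Rabs D)%R).
    { apply (Rmult_lt_compat_r (Rabs a * (s - 1))) in HB; [|exact HX].
      replace (Rabs D / (Rabs a * (s - 1)) * (Rabs a * (s - 1)))%R with (Rabs D) in HB
        by (field; lra). lra. }
    assert (Hl1 : (1 <= Rabs (IZR l))%R) by (rewrite <- abs_IZR; apply IZR_le; lia).
    assert (HsN : (1 + INR N * (s - 1) <= s ^ N)%R) by (apply bern; lra).
    assert (HBN' : (INR B <= INR N)%R) by (apply le_INR; auto).
    assert (ED : Rabs D = (Rabs a * s ^ N * Rabs (IZR l))%R).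
    { rewrite E, !Rabs_mult, <- RPow_abs. reflexivity. }
    assert (HsN0 : (0 <= s ^ N)%R) by (apply pow_le; lra).
    assert (HP : (0 <= Rabs a * s ^ N)%R) by (apply Rmult_le_pos; lra).
    assert (Rabs a * s ^ N <= Rabs a * s ^ N * Rabs (IZR l))%R.
    { rewrite <- (Rmult_1_r (Rabs a * s ^ N)) at 1. apply Rmult_le_compat_l; lra. }
    assert (Rabs a * (1 + INR N * (s - 1)) <= Rabs a * s ^ N)%R by (apply Rmult_le_compat_l; lra).
    assert (Rabs a * (s - 1) * INR B <= Rabs a * (s - 1) * INR N)%R by (apply Rmult_le_compat_l; lra).
    nra.
Qed.

Lemma list_bound (Vu : list vertex) : (forall v, In v Vu -> dist2 m n (TyT, g) v) ->
  exists B, forall v N, In v Vu -> (B <= N)%nat -> ~ adj m n v (wN N).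
Proof.
  induction Vu as [|v Vu IH]; intros H.
  - exists 0%nat. intros v N [].
  - destruct IH as [B1 HB1]. { intros; apply H; right; auto. }
    destruct (bound v) as [B2 HB2]. { apply H; left; auto. }
    exists (Nat.max B1 B2). intros w N [<-|Hin] HN.
    + apply HB2. lia.
    + apply HB1; auto. lia.
Qed.

Lemma back : (exists Vu : list vertex,
    (forall v, In v Vu -> dist2 m n (TyT, g) v) /\
    (forall w, adj m n (TyT, g) w -> exists v, In v Vu /\ adj m n v w)) -> False.
Proof.
  intros [Vu [H1 H2]]. destruct (list_bound Vu H1) as [B HB].
  destruct (H2 (wN B) (adj_u_wN B)) as [v [Hin Hadj]].
  exact (HB v B Hin (le_n _) Hadj).
Qed.
End Back.

Lemma forward g : exists Vu : list vertex,
    (forall v, In v Vu -> dist2 m n (TyA, g) v) /\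
    (forall w, adj m n (TyA, g) w -> exists v, In v Vu /\ adj m n v w).
Proof.
  exists (map (fun i => (TyA, g ++ lpow LA (Z.of_nat i) ++ [LT])) (seq 0 (Z.to_nat (Z.abs n)))).
  split.
  - intros v Hv. apply in_map_iff in Hv. destruct Hv as [i [<- _]].
    split; [|split].
    + intros [_ [k Hk]]. simpl in Hk. apply (phi_inv m n hm hn) in Hk.
      rewrite !phi_app, !phi_lpowA in Hk. apply (f_equal fst) in Hk.
      simpl in Hk. unfold comp in Hk; simpl in Hk.
      pose proof (fst_phi_nz m n hm hn g). pose proof rr_ne1.
      apply H0. apply (Rmult_eq_reg_l (fst (phi m n g))); auto. nra.
    + intros [H _]. simpl in H. congruence.
    + exists (TyT, g ++ lpow LA (Z.of_nat i)). split.
      * split; [discriminate|]. exists (Z.of_nat i), 0. simpl.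
        change (lpow LT 0) with (@nil letter). rewrite app_nil_r. reflexivity.
      * split; [discriminate|]. exists 1, 0. simpl.
        change (lpow LT 1) with [LT]. change (lpow LA 0) with (@nil letter).
        rewrite app_nil_r, <- app_assoc. reflexivity.
  - intros [ty h] [Hty [k [l H]]]. simpl in Hty, H.
    destruct ty; [congruence|]. simpl in H.
    assert (HN : Z.abs n <> 0) by lia.
    set (N := Z.abs n) in *.
    pose proof (Z.mod_pos_bound k N ltac:(lia)) as Hj.
    pose proof (Z.div_mod k N HN) as Hk.
    set (j := k mod N) in *. set (q := k / N) in *.
    assert (Hq : exists q', N * q = q' * n).
    { unfold N. destruct (Z.abs_spec n) as [[_ ->]|[_ ->]]; [exists q; ring | exists (-q); ring]. }
    destruct Hq as [q' Hq].
    exists (TyA, g ++ lpow LA j ++ [LT]). split.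
    + apply in_map_iff. exists (Z.to_nat j). split.
      * rewrite Z2Nat.id by lia. reflexivity.
      * apply in_seq. lia.
    + split; [discriminate|]. exists (q' * m), (l + 1). simpl.
      rewrite <- (lpow_add m n LT l 1). change (lpow LT 1) with [LT].
      rewrite (app_assoc h), <- H.
      replace k with (j + q' * n) by lia.
      rewrite <- (lpow_add m n LA j). rewrite <- !app_assoc.
      rewrite (rel_Z m n q'). reflexivity.
Qed.
End M.

Theorem lemma3p3 (m n : Z) (hm : m <> 0) (hn : n <> 0) (hmn : Z.abs m < Z.abs n)
  (u : vertex) :
  fst u = TyA <->
  exists Vu : list vertex,
    (forall v, In v Vu -> dist2 m n u v) /\
    (forall w, adj m n u w -> exists v, In v Vu /\ adj m n v w).
Proof.
  destruct u as [ty g]. simpl. split.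
  - intros ->. exact (forward m n hm hn hmn g).
  - intros H. destruct ty; auto. exfalso. exact (back m n hm hn hmn g H).
Qed.
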